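(* Let $(\mathcal H,\mathfrak A_0)$ be a Hilbert quasi *-algebra and $\xi\in\mathcal H$. Then: (i) ${\sf R}(\xi^* )=\{\eta\in D((L_\xi\restriction_{\mathfrak A_0^2})^* ):\ \eta y\in D(L_\xi^* )\ \text{for all } y\in\mathfrak A_0\}$; (ii) if $(\mathcal H,\mathfrak A_0)$ has a unit, then ${\sf R}(\xi^* )=D(L_\xi^* )$; (iii) if $(\mathcal H,\mathfrak A_0)$ has a unit and ${\sf R}(\xi^* )=\mathcal H$, then $\overline{L}_\xi$ and $\overline{L}_{\xi^*}$ are bounded operators.
   Context: A Hilbert algebra is a *-algebra $\mathfrak A_0$ with an inner product $\langle\cdot,\cdot\rangle$ such that (i) for each $x$, $y\mapsto xy$ is continuous for the inner product norm; (ii) $\langle xy,z\rangle=\langle y,x^*z\rangle$ for all $x,y,z$; (iii) $\langle x,y\rangle=\langle y^*,x^*\rangle$ for all $x,y$; (iv) the linear span of $\{xy:x,y\in\mathfrak A_0\}$ is dense in $\mathfrak A_0$. Let $\mathcal H$ be the Hilbert space completion of $\mathfrak A_0$; the involution extends isometrically to $\mathcal H$, and the products $\xi x$, $x\xi$ for $\xi\in\mathcal H$, $x\in\mathfrak A_0$ are defined by continuity. It is assumed that (A): if $\xi\in\mathcal H$ and $\xi x=0$ for all $x\in\mathfrak A_0$ then $\xi=0$. With these operations $(\mathcal H,\mathfrak A_0)$ is a Banach quasi *-algebra, called a Hilbert quasi *-algebra. A unit is $e\in\mathfrak A_0$ with $\xi e=e\xi=\xi$ for all $\xi\in\mathcal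 H$. For $\xi\in\mathcal H$, $L_\xi$ is the operator in $\mathcal H$ with domain $\mathfrak A_0$ given by $L_\xi x=\xi x$; $\overline{L}_\xi$ is its closure. $\mathfrak A_0^2$ denotes the linear span of $\{xy:x,y\in\mathfrak A_0\}$. Weak multiplication: for $\xi,\eta\in\mathcal H$, $\xi$ is a left multiplier of $\eta$ (and $\eta$ a right multiplier of $\xi$) if there is $\zeta\in\mathcal H$ with $\langle\eta x,\xi^*y\rangle=\langle\zeta x,y\rangle$ for all $x,y\in\mathfrak A_0$; then $\xi\square\eta:=\zeta$. ${\sf R}(\xi)$ denotes the set of right multipliers of $\xi$, i.e. of those $\eta$ for which $\xi\square\eta$ is defined. *)

(* Defs.v *)
From Stdlib Require Import Reals.
Open Scope R_scope.

Record Cplx : Type := mkC { re : R; im : R }.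
Definition C0 : Cplx := mkC 0 0.
Definition C1 : Cplx := mkC 1 0.
Definition Cadd (a b : Cplx) : Cplx := mkC (re a + re b) (im a + im b).
Definition Cmul (a b : Cplx) : Cplx :=
  mkC (re a * re b - im a * im b) (re a * im b + im a * re b).
Definition Cconj (a : Cplx) : Cplx := mkC (re a) (- im a).

(** [carrier] is the Hilbert space H (complex, inner product linear in the
  first argument, complete).  [inA0] is the dense subspace A0, which is a
  Hilbert algebra for the restricted operations.  [mulr xi x] is the product
  xi x (xi in H, x in A0) and [mull x xi] is x xi; both are the continuous
  extensions of the product of A0 (they are only meaningful when the A0
  argument is in A0).  [star] is the isometric extension of the involution. *)
Record HQA : Type := {
  carrier :> Type;
  add : carrier -> carrier -> carrier;
  zero : carrier;
  opp : carrier -> carrier;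
  scal : Cplx -> carrier -> carrier;
  inner : carrier -> carrier -> Cplx;
  star : carrier -> carrier;
  mulr : carrier -> carrier -> carrier;
  mull : carrier -> carrier -> carrier;
  inA0 : carrier -> Prop;

  add_assoc : forall x y z, add x (add y z) = add (add x y) z;
  add_comm : forall x y, add x y = add y x;
  add_zero : forall x, add x zero = x;
  add_opp : forall x, add x (opp x) = zero;
  scal_assoc : forall a b x, scal a (scal b x) = scal (Cmul a b) x;
  scal_one : forall x, scal C1 x = x;
  scal_add_l : forall a x y, scal a (add x y) = add (scal a x) (scal a y);
  scal_add_r : forall a b x, scal (Cadd a b) x = add (scal a x) (scal b x);

  inner_add_l : forall x y z, inner (add x y) z = Cadd (inner x z) (inner y z);
  inner_scal_l : forall a x y, inner (scal a x) y = Cmul a (inner x y);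
  inner_conj : forall x y, inner y x = Cconj (inner x y);
  inner_pos : forall x, 0 <= re (inner x x);
  inner_def : forall x, inner x x = C0 -> x = zero;

  complete : forall u : nat -> carrier,
    (forall eps, 0 < eps -> exists N, forall m n, (N <= m)%nat -> (N <= n)%nat ->
        sqrt (re (inner (add (u m) (opp (u n))) (add (u m) (opp (u n))))) < eps) ->
    exists l, forall eps, 0 < eps -> exists N, forall n, (N <= n)%nat ->
        sqrt (re (inner (add (u n) (opp l)) (add (u n) (opp l)))) < eps;

  A0_zero : inA0 zero;
  A0_add : forall x y, inA0 x -> inA0 y -> inA0 (add x y);
  A0_scal : forall a x, inA0 x -> inA0 (scal a x);
  A0_dense : forall xi eps, 0 < eps -> exists x, inA0 x /\
      sqrt (re (inner (add xi (opp x)) (add xi (opp x)))) < eps;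

  A0_mul : forall x y, inA0 x -> inA0 y -> inA0 (mulr x y);
  mul_agree : forall x y, inA0 x -> inA0 y -> mulr x y = mull x y;
  mul_assoc : forall x y z, inA0 x -> inA0 y -> inA0 z ->
      mulr (mulr x y) z = mulr x (mulr y z);
  mulr_add_r : forall x y z, inA0 x -> inA0 y -> inA0 z ->
      mulr x (add y z) = add (mulr x y) (mulr x z);
  mulr_scal_r : forall a x y, inA0 x -> inA0 y ->
      mulr x (scal a y) = scal a (mulr x y);
  A0_star : forall x, inA0 x -> inA0 (star x);
  star_mul : forall x y, inA0 x -> inA0 y -> star (mulr x y) = mulr (star y) (star x);

  mulr_add_l : forall xi eta x, inA0 x -> mulr (add xi eta) x = add (mulr xi x) (mulr eta x);
  mulr_scal_l : forall a xi x, inA0 x -> mulr (scal a xi) x = scal a (mulr xi x);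
  mulr_bounded : forall x, inA0 x -> exists c, forall xi,
      sqrt (re (inner (mulr xi x) (mulr xi x))) <= c * sqrt (re (inner xi xi));
  mull_add_r : forall x xi eta, inA0 x -> mull x (add xi eta) = add (mull x xi) (mull x eta);
  mull_scal_r : forall a x xi, inA0 x -> mull x (scal a xi) = scal a (mull x xi);
  mull_bounded : forall x, inA0 x -> exists c, forall xi,
      sqrt (re (inner (mull x xi) (mull x xi))) <= c * sqrt (re (inner xi xi));

  star_star : forall xi, star (star xi) = xi;
  star_add : forall xi eta, star (add xi eta) = add (star xi) (star eta);
  star_scal : forall a xi, star (scal a xi) = scal (Cconj a) (star xi);
  star_isometric : forall xi, re (inner (star xi) (star xi)) = re (inner xi xi);

  HA_ii : forall x y z, inA0 x -> inA0 y -> inA0 z ->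
      inner (mulr x y) z = inner y (mulr (star x) z);
  HA_iii : forall x y, inA0 x -> inA0 y -> inner x y = inner (star y) (star x);

  (* Hilbert algebra axiom (iv): A0^2 dense in A0 *)
  HA_iv : forall x eps, inA0 x -> 0 < eps -> exists z,
      (exists l : list (carrier * carrier),
          (forall p, List.In p l -> inA0 (fst p) /\ inA0 (snd p)) /\
          z = List.fold_right (fun p acc => add (mulr (fst p) (snd p)) acc) zero l) /\
      sqrt (re (inner (add x (opp z)) (add x (opp z)))) < eps;

  condA : forall xi, (forall x, inA0 x -> mulr xi x = zero) -> xi = zero
}.

Arguments add {_}. Arguments zero {_}. Arguments opp {_}. Arguments scal {_}.
Arguments inner {_}. Arguments star {_}. Arguments mulr {_}. Arguments mull {_}.
Arguments inA0 {_}.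

Section Defs.
Variable A : HQA.

Definition hnorm (xi : A) : R := sqrt (re (inner xi xi)).

Definition converges (u : nat -> A) (l : A) : Prop :=
  forall eps, 0 < eps -> exists N, forall n, (N <= n)%nat -> hnorm (add (u n) (opp l)) < eps.

Inductive A0sq : A -> Prop :=
| A0sq_zero : A0sq zero
| A0sq_prod : forall x y, inA0 x -> inA0 y -> A0sq (mulr x y)
| A0sq_add : forall u v, A0sq u -> A0sq v -> A0sq (add u v)
| A0sq_scal : forall a u, A0sq u -> A0sq (scal a u).

(** eta in D(L_xi^* ), L_xi x = xi x with domain A0 *)
Definition in_dom_adj_L (xi eta : A) : Prop :=
  exists zeta : A, forall x, inA0 x -> inner (mulr xi x) eta = inner x zeta.

Definition in_dom_adj_L_sq (xi eta : A) : Prop :=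
  exists zeta : A, forall z, A0sq z -> inner (mulr xi z) eta = inner z zeta.

Definition weak_mul (xi eta zeta : A) : Prop :=
  forall x y, inA0 x -> inA0 y ->
    inner (mulr eta x) (mulr (star xi) y) = inner (mulr zeta x) y.

Definition right_multipliers (xi eta : A) : Prop := exists zeta, weak_mul xi eta zeta.

Definition has_unit : Prop :=
  exists e : A, inA0 e /\ forall xi : A, mulr xi e = xi /\ mull e xi = xi.

Definition closure_graph (xi u v : A) : Prop :=
  exists x : nat -> A, (forall n, inA0 (x n)) /\ converges x u /\
    converges (fun n => mulr xi (x n)) v.

Definition closure_bounded (xi : A) : Prop :=
  (forall u, exists v, closure_graph xi u v) /\
  exists c : R, forall u v, closure_graph xi u v -> hnorm v <= c * hnorm u.

End Defs.

(* Main.v *)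
Require Import Defs.
From Stdlib Require Import Reals Lra Lia Psatz Classical ClassicalEpsilon.
Open Scope R_scope.
Arguments add_assoc {_}.
Arguments add_comm {_}.
Arguments add_zero {_}.
Arguments add_opp {_}.
Arguments scal_assoc {_}.
Arguments scal_one {_}.
Arguments scal_add_l {_}.
Arguments scal_add_r {_}.
Arguments inner_add_l {_}.
Arguments inner_scal_l {_}.
Arguments inner_conj {_}.
Arguments inner_pos {_}.
Arguments inner_def {_}.
Arguments complete {_}.
Arguments A0_zero {_}.
Arguments A0_add {_}.
Arguments A0_scal {_}.
Arguments A0_dense {_}.
Arguments A0_mul {_}.
Arguments mul_agree {_}.
Arguments mul_assoc {_}.
Arguments mulr_add_r {_}.
Arguments mulr_scal_r {_}.
Arguments A0_star {_}.
Arguments star_mul {_}.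
Arguments mulr_add_l {_}.
Arguments mulr_scal_l {_}.
Arguments mulr_bounded {_}.
Arguments mull_add_r {_}.
Arguments mull_scal_r {_}.
Arguments mull_bounded {_}.
Arguments star_star {_}.
Arguments star_add {_}.
Arguments star_scal {_}.
Arguments star_isometric {_}.
Arguments HA_ii {_}.
Arguments HA_iii {_}.
Arguments HA_iv {_}.
Arguments condA {_}.

Section Basics.
Variable A : HQA.
Notation sub x y := (add x (opp y)).
Notation nrm x := (hnorm A x).
Notation n2 x := (re (inner x x)).
Definition m1 : Cplx := mkC (-1) 0.

Lemma add0l (x : A) : add zero x = x.
Proof. rewrite add_comm; apply add_zero. Qed.
Lemma addNl (x : A) : add (opp x) x = zero.
Proof. rewrite add_comm; apply add_opp. Qed.
Lemma add_cancel (a b c : A) : add a b = add a c -> b = c.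
Proof.
  intro H. rewrite <- (add0l b), <- (add0l c), <- (addNl a), <- !add_assoc, H. reflexivity.
Qed.
Lemma opp_unique (x y : A) : add x y = zero -> y = opp x.
Proof. intro H. apply (add_cancel x). rewrite H, add_opp. reflexivity. Qed.
Lemma oppK (x : A) : opp (opp x) = x.
Proof. symmetry; apply opp_unique; apply addNl. Qed.
Lemma opp_add (x y : A) : opp (add x y) = add (opp x) (opp y).
Proof.
  symmetry; apply opp_unique.
  rewrite (add_comm (opp x)), add_assoc, <- (add_assoc x y), add_opp, add_zero, add_opp.
  reflexivity.
Qed.
Lemma opp_zero : opp (@zero A) = zero.
Proof. symmetry; apply opp_unique; apply add_zero. Qed.
Lemma sub_split (p q r : A) : sub p q = add (sub p r) (sub r q).
Proof. rewrite <- add_assoc, (add_assoc (opp r)), addNl, add0l. reflexivity. Qed.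
Lemma add4 (p q r s : A) : add (add p q) (add r s) = add (add p r) (add q s).
Proof.
  rewrite <- !add_assoc. f_equal. rewrite !add_assoc. f_equal. apply add_comm.
Qed.
Lemma sub_addadd (p q r s : A) : add (sub p q) (sub r s) = sub (add p r) (add q s).
Proof. rewrite opp_add. apply add4. Qed.
Lemma sub_add (a b : A) : add (sub a b) b = a.
Proof. rewrite <- add_assoc, addNl, add_zero. reflexivity. Qed.
Lemma add_sub (x y : A) : x = add y (sub x y).
Proof. rewrite add_comm. symmetry; apply sub_add. Qed.
Lemma sub_opp (a b : A) : opp (sub a b) = sub b a.
Proof. rewrite opp_add, oppK, add_comm. reflexivity. Qed.
Lemma subxx (a : A) : sub a a = zero.
Proof. apply add_opp. Qed.
Lemma sub_addr (p q r : A) : sub (add p q) r = add (sub p r) q.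
Proof. rewrite <- !add_assoc, (add_comm q). reflexivity. Qed.

Lemma scal0 (x : A) : scal Defs.C0 x = zero.
Proof.
  assert (E : scal Defs.C0 x = add (scal Defs.C0 x) (scal Defs.C0 x)).
  { rewrite <- scal_add_r. f_equal. unfold Cadd, Defs.C0; simpl; f_equal; ring. }
  apply (add_cancel (scal Defs.C0 x)). rewrite add_zero. symmetry; exact E.
Qed.
Lemma opp_scal (x : A) : opp x = scal m1 x.
Proof.
  symmetry; apply opp_unique.
  rewrite <- (scal_one x) at 1. rewrite <- scal_add_r.
  replace (Cadd Defs.C1 m1) with Defs.C0 by (unfold Cadd, Defs.C1, m1, Defs.C0; simpl; f_equal; ring).
  apply scal0.
Qed.
Lemma scal_opp (a : Cplx) (x : A) : scal a (opp x) = opp (scal a x).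
Proof.
  rewrite !opp_scal, !scal_assoc. f_equal. destruct a; unfold Cmul, m1; simpl; f_equal; ring.
Qed.
Lemma scal_sub (a : Cplx) (x y : A) : scal a (sub x y) = sub (scal a x) (scal a y).
Proof. rewrite scal_add_l, scal_opp. reflexivity. Qed.
Lemma scal_zero (a : Cplx) : scal a (@zero A) = zero.
Proof.
  rewrite <- (scal0 zero), scal_assoc. f_equal. destruct a; unfold Cmul, Defs.C0; simpl; f_equal; ring.
Qed.

Lemma re_sym (x y : A) : re (inner y x) = re (inner x y).
Proof. rewrite inner_conj. reflexivity. Qed.
Lemma im_sym (x y : A) : im (inner y x) = - im (inner x y).
Proof. rewrite inner_conj. reflexivity. Qed.
Lemma im_nn (x : A) : im (inner x x) = 0.
Proof. pose proof (im_sym x x). lra. Qed.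
Lemma re_addl (x y z : A) : re (inner (add x y) z) = re (inner x z) + re (inner y z).
Proof. rewrite inner_add_l. reflexivity. Qed.
Lemma im_addl (x y z : A) : im (inner (add x y) z) = im (inner x z) + im (inner y z).
Proof. rewrite inner_add_l. reflexivity. Qed.
Lemma re_addr (x y z : A) : re (inner z (add x y)) = re (inner z x) + re (inner z y).
Proof. rewrite re_sym, re_addl, (re_sym z x), (re_sym z y). reflexivity. Qed.
Lemma im_addr (x y z : A) : im (inner z (add x y)) = im (inner z x) + im (inner z y).
Proof. rewrite im_sym, im_addl, (im_sym z x), (im_sym z y). ring. Qed.
Lemma re_scall (a : Cplx) (x y : A) :
  re (inner (scal a x) y) = re a * re (inner x y) - im a * im (inner x y).
Proof. rewrite inner_scal_l. reflexivity. Qed.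
Lemma im_scall (a : Cplx) (x y : A) :
  im (inner (scal a x) y) = re a * im (inner x y) + im a * re (inner x y).
Proof. rewrite inner_scal_l. reflexivity. Qed.
Lemma re_scalr (a : Cplx) (x y : A) :
  re (inner y (scal a x)) = re a * re (inner y x) + im a * im (inner y x).
Proof. rewrite re_sym, re_scall, (re_sym y x), (im_sym y x). ring. Qed.
Lemma im_scalr (a : Cplx) (x y : A) :
  im (inner y (scal a x)) = re a * im (inner y x) - im a * re (inner y x).
Proof. rewrite im_sym, im_scall, (re_sym y x), (im_sym y x). ring. Qed.
Lemma re_oppl (x y : A) : re (inner (opp x) y) = - re (inner x y).
Proof. rewrite opp_scal, re_scall. unfold m1; simpl. ring. Qed.
Lemma im_oppl (x y : A) : im (inner (opp x) y) = - im (inner x y).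
Proof. rewrite opp_scal, im_scall. unfold m1; simpl. ring. Qed.
Lemma re_oppr (x y : A) : re (inner y (opp x)) = - re (inner y x).
Proof. rewrite opp_scal, re_scalr. unfold m1; simpl. ring. Qed.
Lemma im_oppr (x y : A) : im (inner y (opp x)) = - im (inner y x).
Proof. rewrite opp_scal, im_scalr. unfold m1; simpl. ring. Qed.
Lemma re_subl (x y z : A) : re (inner (sub x y) z) = re (inner x z) - re (inner y z).
Proof. rewrite re_addl, re_oppl. ring. Qed.
Lemma im_subl (x y z : A) : im (inner (sub x y) z) = im (inner x z) - im (inner y z).
Proof. rewrite im_addl, im_oppl. ring. Qed.
Lemma re_subr (x y z : A) : re (inner z (sub x y)) = re (inner z x) - re (inner z y).
Proof. rewrite re_addr, re_oppr. ring. Qed.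
Lemma im_subr (x y z : A) : im (inner z (sub x y)) = im (inner z x) - im (inner z y).
Proof. rewrite im_addr, im_oppr. ring. Qed.
Lemma inner_zero_l (y : A) : inner zero y = Defs.C0.
Proof.
  rewrite <- (scal0 zero), inner_scal_l. unfold Cmul, Defs.C0; simpl; f_equal; ring.
Qed.
Lemma inner_zero_r (y : A) : inner y zero = Defs.C0.
Proof. rewrite inner_conj, inner_zero_l. unfold Cconj, Defs.C0; simpl; f_equal; ring. Qed.
Lemma Cconj_inj (a b : Cplx) : Cconj a = Cconj b -> a = b.
Proof.
  destruct a, b; unfold Cconj; simpl. intro H. injection H. intros; f_equal; lra.
Qed.
Lemma Ceq (a b : Cplx) : re a = re b -> im a = im b -> a = b.
Proof. destruct a, b; simpl; intros; subst; reflexivity. Qed.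

Lemma n2_pos (x : A) : 0 <= n2 x.
Proof. apply inner_pos. Qed.
Lemma nrm_pos (x : A) : 0 <= nrm x.
Proof. unfold hnorm. apply sqrt_pos. Qed.
Lemma nrm_sq (x : A) : nrm x * nrm x = n2 x.
Proof. unfold hnorm. apply sqrt_sqrt, n2_pos. Qed.
Lemma nrm0 (x : A) : nrm x = 0 -> x = zero.
Proof.
  intro H. apply inner_def. unfold hnorm in H. apply sqrt_eq_0 in H; [|apply n2_pos].
  apply Ceq; [exact H| rewrite im_nn; reflexivity].
Qed.
Lemma nrm_zero : nrm (@zero A) = 0.
Proof. unfold hnorm. rewrite inner_zero_l. unfold Defs.C0; simpl. apply sqrt_0. Qed.

Lemma n2_scal (a : Cplx) (x : A) : n2 (scal a x) = (re a * re a + im a * im a) * n2 x.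
Proof. rewrite re_scall, re_scalr, im_scalr, im_nn. ring. Qed.
Lemma nrm_scal (a : Cplx) (x : A) : nrm (scal a x) = sqrt (re a * re a + im a * im a) * nrm x.
Proof. unfold hnorm. rewrite n2_scal, sqrt_mult; [reflexivity | nra | apply n2_pos]. Qed.
Lemma nrm_opp (x : A) : nrm (opp x) = nrm x.
Proof. rewrite opp_scal, nrm_scal. unfold m1; simpl.
  replace (-1 * -1 + 0 * 0) with 1 by ring. rewrite sqrt_1. ring. Qed.
Definition rs (t : R) (x : A) := scal (mkC t 0) x.
Lemma nrm_rs (t : R) (x : A) : nrm (rs t x) = Rabs t * nrm x.
Proof. unfold rs. rewrite nrm_scal; simpl. replace (t * t + 0 * 0) with (t²) by (unfold Rsqr; ring).
  rewrite sqrt_Rsqr_abs. reflexivity. Qed.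
Lemma re_rsl (t : R) (x y : A) : re (inner (rs t x) y) = t * re (inner x y).
Proof. unfold rs. rewrite re_scall; simpl. ring. Qed.
Lemma re_rsr (t : R) (x y : A) : re (inner y (rs t x)) = t * re (inner y x).
Proof. unfold rs. rewrite re_scalr; simpl. ring. Qed.
Lemma nrm_sub_sym (a b : A) : nrm (sub a b) = nrm (sub b a).
Proof. rewrite <- sub_opp, nrm_opp. reflexivity. Qed.

Lemma quad_disc (a b c : R) : 0 <= a -> 0 <= c -> (forall t, 0 <= a + 2 * t * b + t * t * c) ->
  b * b <= a * c.
Proof.
  intros Ha Hc H. destruct (Rle_lt_or_eq_dec 0 c Hc) as [Hc'|Hc'].
  - specialize (H (- b / c)).
    replace (a + 2 * (- b / c) * b + - b / c * (- b / c) * c) with (a - b * b / c) in H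
      by (field; lra).
    assert (b * b / c <= a) by lra.
    apply (Rmult_le_reg_r (/ c)); [apply Rinv_0_lt_compat; lra|].
    replace (a * c * / c) with a by (field; lra). unfold Rdiv in *; lra.
  - subst c. destruct (Req_dec b 0) as [Hb|Hb]; [subst; nra|].
    specialize (H (- (a + 1) / (2 * b))).
    replace (a + 2 * (- (a + 1) / (2 * b)) * b + - (a + 1) / (2 * b) * (- (a + 1) / (2 * b)) * 0)
      with (-1) in H by (field; lra). lra.
Qed.
Lemma n2_add_rs (x y : A) (t : R) :
  n2 (add x (rs t y)) = n2 x + 2 * t * re (inner x y) + t * t * n2 y.
Proof.
  rewrite re_addl, !re_addr, re_rsr, !re_rsl, re_rsr, (re_sym x y). ring.
Qed.
Lemma cs_re (x y : A) : Rabs (re (inner x y)) <= nrm x * nrm y.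
Proof.
  assert (H : re (inner x y) * re (inner x y) <= n2 x * n2 y).
  { apply quad_disc; try apply n2_pos. intro t. rewrite <- n2_add_rs. apply n2_pos. }
  unfold hnorm. rewrite <- sqrt_mult by apply n2_pos.
  rewrite <- sqrt_Rsqr_abs. apply sqrt_le_1_alt. unfold Rsqr. exact H.
Qed.
Lemma cs_im (x y : A) : Rabs (im (inner x y)) <= nrm x * nrm y.
Proof.
  pose proof (cs_re x (scal (mkC 0 1) y)) as H.
  rewrite re_scalr, nrm_scal in H; simpl in H.
  replace (0 * 0 + 1 * 1) with 1 in H by ring. rewrite sqrt_1 in H.
  replace (0 * re (inner x y) + 1 * im (inner x y)) with (im (inner x y)) in H by ring. lra.
Qed.
Lemma nrm_add (x y : A) : nrm (add x y) <= nrm x + nrm y.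
Proof.
  assert (H : n2 (add x y) <= (nrm x + nrm y) * (nrm x + nrm y)).
  { rewrite re_addl, !re_addr, (re_sym x y).
    pose proof (cs_re x y). pose proof (Rle_abs (re (inner x y))).
    rewrite <- (nrm_sq x), <- (nrm_sq y). nra. }
  unfold hnorm at 1. rewrite <- (sqrt_square (nrm x + nrm y)).
  - apply sqrt_le_1_alt. exact H.
  - pose proof (nrm_pos x); pose proof (nrm_pos y); lra.
Qed.
Lemma nrm_sub3 (p q r : A) : nrm (sub p q) <= nrm (sub p r) + nrm (sub r q).
Proof. rewrite (sub_split p q r). apply nrm_add. Qed.


Lemma sub_eq0 (a b : A) : sub a b = zero -> a = b.
Proof. intro H. rewrite (add_sub a b), H, add_zero. reflexivity. Qed.

Definition LB (F : A -> A) : Prop :=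
  (forall a b, F (sub a b) = sub (F a) (F b)) /\
  exists K, 0 <= K /\ forall a, nrm (F a) <= K * nrm a.

Lemma small_zero (r : R) : 0 <= r -> (forall eps, 0 < eps -> r <= eps) -> r = 0.
Proof.
  intros H0 H. apply Rle_antisym; auto. apply Rle_plus_epsilon. intros e He.
  rewrite Rplus_0_l. auto.
Qed.

Lemma dens_vec (F G : A -> A) : LB F -> LB G -> (forall x, inA0 x -> F x = G x) ->
  forall xi, F xi = G xi.
Proof.
  intros [LF [KF [KF0 BF]]] [LG [KG [KG0 BG]]] Hag xi.
  apply sub_eq0, nrm0, small_zero; [apply nrm_pos|]. intros eps Heps.
  set (d := eps / (KF + KG + 1)).
  assert (Hd : 0 < d) by (unfold d; apply Rdiv_lt_0_compat; lra).
  destruct (A0_dense xi d Hd) as [x [Hx Hn]].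
  change (nrm (sub xi x) < d) in Hn.
  rewrite (sub_split _ _ (F x)). replace (sub (F x) (G xi)) with (sub (G x) (G xi)) by (rewrite (Hag x Hx); reflexivity).
  rewrite <- LF, <- LG.
  eapply Rle_trans; [apply nrm_add|].
  pose proof (BF (sub xi x)). pose proof (BG (sub x xi)).
  rewrite nrm_sub_sym in H0.
  assert (eps = (KF + KG + 1) * d) by (unfold d; field; lra).
  pose proof (nrm_pos (sub xi x)). nra.
Qed.

Definition Lip (f : A -> Cplx) : Prop :=
  exists K, 0 <= K /\ forall a b,
    Rabs (re (f a) - re (f b)) <= K * nrm (sub a b) /\
    Rabs (im (f a) - im (f b)) <= K * nrm (sub a b).

Lemma dens_sc (f g : A -> Cplx) : Lip f -> Lip g -> (forall x, inA0 x -> f x = g x) ->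
  forall xi, f xi = g xi.
Proof.
  intros [KF [KF0 BF]] [KG [KG0 BG]] Hag xi.
  assert (main : forall eps, 0 < eps ->
    Rabs (re (f xi) - re (g xi)) <= eps /\ Rabs (im (f xi) - im (g xi)) <= eps).
  { intros eps Heps.
    set (d := eps / (KF + KG + 1)).
    assert (Hd : 0 < d) by (unfold d; apply Rdiv_lt_0_compat; lra).
    destruct (A0_dense xi d Hd) as [x [Hx Hn]].
    change (nrm (sub xi x) < d) in Hn.
    destruct (BF xi x) as [B1 B2]. destruct (BG x xi) as [B3 B4].
    rewrite nrm_sub_sym in B3, B4. rewrite (Hag x Hx) in B1, B2.
    assert (eps = (KF + KG + 1) * d) by (unfold d; field; lra).
    pose proof (nrm_pos (sub xi x)).
    assert (KF * nrm (sub xi x) + KG * nrm (sub xi x) <= eps) by nra.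
    split.
    - replace (re (f xi) - re (g xi)) with ((re (f xi) - re (g x)) + (re (g x) - re (g xi))) by ring.
      eapply Rle_trans; [apply Rabs_triang|]. lra.
    - replace (im (f xi) - im (g xi)) with ((im (f xi) - im (g x)) + (im (g x) - im (g xi))) by ring.
      eapply Rle_trans; [apply Rabs_triang|]. lra. }
  apply Ceq.
  - assert (Rabs (re (f xi) - re (g xi)) = 0).
    { apply small_zero; [apply Rabs_pos|]. intros; apply main; auto. }
    destruct (Rcase_abs (re (f xi) - re (g xi))) ; [rewrite Rabs_left in H by lra | rewrite Rabs_right in H by lra]; lra.
  - assert (Rabs (im (f xi) - im (g xi)) = 0).
    { apply small_zero; [apply Rabs_pos|]. intros; apply main; auto. }
    destruct (Rcase_abs (im (f xi) - im (g xi))) ; [rewrite Rabs_left in H by lra | rewrite Rabs_right in H by lra]; lra.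
Qed.

Lemma Lip_l (F : A -> A) (w : A) : LB F -> Lip (fun a => inner (F a) w).
Proof.
  intros [LF [K [K0 BF]]]. exists (K * nrm w). split.
  { pose proof (nrm_pos w); nra. }
  intros a b. rewrite <- re_subl, <- im_subl, <- LF.
  pose proof (BF (sub a b)). pose proof (nrm_pos w).
  split; [eapply Rle_trans; [apply cs_re|] | eapply Rle_trans; [apply cs_im|]]; nra.
Qed.
Lemma Lip_r (F : A -> A) (w : A) : LB F -> Lip (fun a => inner w (F a)).
Proof.
  intros [LF [K [K0 BF]]]. exists (K * nrm w). split.
  { pose proof (nrm_pos w); nra. }
  intros a b. rewrite <- re_subr, <- im_subr, <- LF.
  pose proof (BF (sub a b)). pose proof (nrm_pos w).
  split; [eapply Rle_trans; [apply cs_re|] | eapply Rle_trans; [apply cs_im|]]; nra.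
Qed.

Lemma LB_id : LB (fun a => a).
Proof. split; [reflexivity|]. exists 1. split; [lra|]. intro; lra. Qed.
Lemma LB_comp (F G : A -> A) : LB F -> LB G -> LB (fun a => G (F a)).
Proof.
  intros [LF [KF [KF0 BF]]] [LG [KG [KG0 BG]]]. split.
  - intros a b. rewrite LF, LG. reflexivity.
  - exists (KG * KF). split; [nra|]. intro a. eapply Rle_trans; [apply BG|].
    pose proof (BF a). nra.
Qed.
Lemma LB_add (F G : A -> A) : LB F -> LB G -> LB (fun a => add (F a) (G a)).
Proof.
  intros [LF [KF [KF0 BF]]] [LG [KG [KG0 BG]]]. split.
  - intros a b. rewrite LF, LG. apply sub_addadd.
  - exists (KF + KG). split; [lra|]. intro a. eapply Rle_trans; [apply nrm_add|].
    pose proof (BF a); pose proof (BG a). lra.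
Qed.
Lemma LB_scal (s : Cplx) : LB (scal s).
Proof.
  split.
  - intros a b. apply scal_sub.
  - exists (sqrt (re s * re s + im s * im s)). split; [apply sqrt_pos|].
    intro a. rewrite nrm_scal. lra.
Qed.
Lemma star_sub (a b : A) : star (sub a b) = sub (star a) (star b).
Proof.
  rewrite star_add, !opp_scal, star_scal. f_equal. f_equal.
  unfold Cconj, m1; simpl; f_equal; ring.
Qed.
Lemma nrm_star (a : A) : nrm (star a) = nrm a.
Proof. unfold hnorm. rewrite star_isometric. reflexivity. Qed.
Lemma LB_star : LB (@star A).
Proof.
  split; [apply star_sub|]. exists 1. split; [lra|]. intro; rewrite nrm_star; lra.
Qed.
Lemma mulr_sub_l (x a b : A) : inA0 x -> mulr (sub a b) x = sub (mulr a x) (mulr b x).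
Proof.
  intro Hx. rewrite mulr_add_l by exact Hx. rewrite !opp_scal, mulr_scal_l by exact Hx.
  reflexivity.
Qed.
Lemma LB_mulr (x : A) : inA0 x -> LB (fun a => mulr a x).
Proof.
  intro Hx. split.
  - intros; apply mulr_sub_l; exact Hx.
  - destruct (mulr_bounded x Hx) as [c Hc]. exists (Rabs c). split; [apply Rabs_pos|].
    intro a. specialize (Hc a). change (nrm (mulr a x) <= c * nrm a) in Hc.
    pose proof (Rle_abs c). pose proof (nrm_pos a). nra.
Qed.

Lemma D1 (xi a b : A) : inA0 a -> inA0 b -> mulr xi (add a b) = add (mulr xi a) (mulr xi b).
Proof.
  intros Ha Hb. revert xi.
  apply (dens_vec (fun xi => mulr xi (add a b)) (fun xi => add (mulr xi a) (mulr xi b))).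
  - apply LB_mulr, A0_add; auto.
  - apply LB_add; apply LB_mulr; auto.
  - intros x Hx. apply mulr_add_r; auto.
Qed.
Lemma D2 (s : Cplx) (xi a : A) : inA0 a -> mulr xi (scal s a) = scal s (mulr xi a).
Proof.
  intros Ha. revert xi.
  apply (dens_vec (fun xi => mulr xi (scal s a)) (fun xi => scal s (mulr xi a))).
  - apply LB_mulr, A0_scal; auto.
  - apply (LB_comp (fun xi => mulr xi a) (scal s)); [apply LB_mulr; auto | apply LB_scal].
  - intros x Hx. apply mulr_scal_r; auto.
Qed.
Lemma D3 (xi x y : A) : inA0 x -> inA0 y -> mulr xi (mulr x y) = mulr (mulr xi x) y.
Proof.
  intros Hx Hy. revert xi.
  apply (dens_vec (fun xi => mulr xi (mulr x y)) (fun xi => mulr (mulr xi x) y)).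
  - apply LB_mulr, A0_mul; auto.
  - apply (LB_comp (fun xi => mulr xi x) (fun z => mulr z y)); apply LB_mulr; auto.
  - intros z Hz. symmetry; apply mul_assoc; auto.
Qed.
Lemma D4_base (a b y : A) : inA0 a -> inA0 b -> inA0 y ->
  inner (mulr a y) b = inner a (mulr b (star y)).
Proof.
  intros Ha Hb Hy.
  rewrite HA_iii by (auto using A0_mul).
  rewrite star_mul by auto.
  rewrite <- (star_star y) at 1.
  rewrite <- HA_ii by (auto using A0_star).
  rewrite (HA_iii a) by (auto using A0_mul, A0_star).
  rewrite star_mul by (auto using A0_star).
  rewrite star_star. reflexivity.
Qed.
Lemma D4 (a b y : A) : inA0 y -> inner (mulr a y) b = inner a (mulr b (star y)).
Proof.
  intros Hy.
  assert (S1 : forall a, inA0 a -> forall b, inner (mulr a y) b = inner a (mulr b (star y))).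
  { intros a0 Ha0.
    apply (dens_sc (fun b => inner (mulr a0 y) b) (fun b => inner a0 (mulr b (star y)))).
    - apply (Lip_r (fun b => b)), LB_id.
    - apply (Lip_r (fun b => mulr b (star y))), LB_mulr, A0_star; auto.
    - intros; apply D4_base; auto. }
  revert a.
  apply (dens_sc (fun a => inner (mulr a y) b) (fun a => inner a (mulr b (star y)))).
  - apply (Lip_l (fun a => mulr a y)), LB_mulr; auto.
  - apply (Lip_l (fun a => a)), LB_id.
  - intros; apply S1; auto.
Qed.
Lemma D5 (xi x y : A) : inA0 x -> inA0 y -> inner (mulr xi y) x = inner y (mulr (star xi) x).
Proof.
  intros Hx Hy. revert xi.
  apply (dens_sc (fun xi => inner (mulr xi y) x) (fun xi => inner y (mulr (star xi) x))).
  - apply (Lip_l (fun a => mulr a y)), LB_mulr; auto.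
  - apply (Lip_r (fun a => mulr (star a) x)).
    apply (LB_comp (@star A) (fun z => mulr z x)); [apply LB_star | apply LB_mulr; auto].
  - intros z Hz. apply HA_ii; auto.
Qed.
Lemma mulr_zero_r (xi : A) : mulr xi zero = zero.
Proof.
  transitivity (mulr xi (scal Defs.C0 zero)); [rewrite scal0; reflexivity|].
  rewrite D2 by apply A0_zero. apply scal0.
Qed.
Lemma mulr_sub_r (xi a b : A) : inA0 a -> inA0 b ->
  mulr xi (sub a b) = sub (mulr xi a) (mulr xi b).
Proof.
  intros Ha Hb. rewrite D1; auto.
  - rewrite !opp_scal, D2; auto.
  - rewrite opp_scal; apply A0_scal; auto.
Qed.


Lemma A0sq_in (z : A) : A0sq A z -> inA0 z.
Proof.
  induction 1; auto using A0_zero, A0_mul, A0_add, A0_scal.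
Qed.

Lemma part_i_fwd (xi eta : A) : right_multipliers A (star xi) eta ->
  in_dom_adj_L_sq A xi eta /\ forall y, inA0 y -> in_dom_adj_L A xi (mulr eta y).
Proof.
  intros [zeta Hz]. unfold weak_mul in Hz. rewrite star_star in Hz.
  assert (Ha : forall x y, inA0 x -> inA0 y ->
     inner (mulr xi x) (mulr eta y) = inner x (mulr zeta y)).
  { intros x y Hx Hy. apply Cconj_inj. rewrite <- !inner_conj. apply Hz; auto. }
  split.
  - exists zeta. induction 1.
    + rewrite mulr_zero_r, !inner_zero_l. reflexivity.
    + rewrite D3 by auto. rewrite D4 by auto. rewrite Ha by auto using A0_star.
      rewrite (D4 x zeta y) by auto. reflexivity.
    + rewrite D1 by (apply A0sq_in; auto). rewrite !inner_add_l, IHA0sq1, IHA0sq2. reflexivity.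
    + rewrite D2 by (apply A0sq_in; auto). rewrite !inner_scal_l, IHA0sq. reflexivity.
  - intros y Hy. exists (mulr zeta y). intros x Hx. apply Ha; auto.
Qed.

Lemma part_i_bwd (xi eta : A) : in_dom_adj_L_sq A xi eta -> right_multipliers A (star xi) eta.
Proof.
  intros [zeta Hz]. exists zeta. intros x y Hx Hy. rewrite star_star.
  assert (H : inner (mulr xi y) (mulr eta x) = inner y (mulr zeta x)).
  { pose proof (Hz (mulr y (star x)) (A0sq_prod A y (star x) Hy (A0_star x Hx))) as H.
    rewrite D3 in H by auto using A0_star.
    rewrite D4 in H by auto using A0_star. rewrite star_star in H. rewrite H.
    rewrite D4 by auto using A0_star. rewrite star_star. reflexivity. }
  apply Cconj_inj. rewrite <- !inner_conj. exact H.
Qed.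

Lemma part_ii (xi : A) : has_unit A -> forall eta,
  right_multipliers A (star xi) eta <-> in_dom_adj_L A xi eta.
Proof.
  intros [e [He Hu]] eta. split.
  - intro H. destruct (part_i_fwd xi eta H) as [_ H2]. specialize (H2 e He).
    destruct (Hu eta) as [E _]. rewrite E in H2. exact H2.
  - intros [zeta Hz]. apply part_i_bwd. exists zeta. intros z Hzs. apply Hz, A0sq_in; auto.
Qed.


Definition uvec (w : A) : A := rs (/ nrm w) w.
Fixpoint Xs (w : nat -> A) (n : nat) : A :=
  match n with
  | O => zero
  | S k => add (Xs w k)
      (rs ((if Rle_dec 0 (re (inner (Xs w k) (w (S k)))) then 1 else -1) * (/3) ^ (S k))
          (uvec (w (S k))))
  end.

Lemma nrm_uvec (w : A) : 0 < nrm w -> nrm (uvec w) = 1.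
Proof.
  intro H. unfold uvec. rewrite nrm_rs, Rabs_right.
  - field. lra.
  - left. apply Rinv_0_lt_compat; exact H.
Qed.
Lemma re_uvec (w : A) : 0 < nrm w -> re (inner (uvec w) w) = nrm w.
Proof.
  intro H. unfold uvec. rewrite re_rsl, <- nrm_sq. field. lra.
Qed.
Lemma pow3_pos (n : nat) : 0 < (/3) ^ n.
Proof. apply pow_lt. lra. Qed.

Section UBP.
Variable w : nat -> A.
Hypothesis Hw : forall n, 0 < nrm (w n).

Lemma Xs_step (k : nat) : nrm (sub (Xs w (S k)) (Xs w k)) = (/3) ^ (S k).
Proof.
  simpl Xs at 1. rewrite sub_addr, subxx, add0l, nrm_rs, nrm_uvec by apply Hw.
  pose proof (pow3_pos (S k)). simpl pow in *.
  destruct (Rle_dec _ _).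
  - rewrite Rabs_right; lra.
  - rewrite Rabs_left; lra.
Qed.
Lemma Xs_dist (n m : nat) :
  nrm (sub (Xs w (n + m)) (Xs w n)) <= / 2 * ((/3) ^ n - (/3) ^ (n + m)).
Proof.
  induction m.
  - rewrite Nat.add_0_r, subxx, nrm_zero. lra.
  - rewrite Nat.add_succ_r. rewrite (sub_split _ _ (Xs w (n + m))).
    eapply Rle_trans; [apply nrm_add|]. rewrite Xs_step.
    simpl pow. pose proof (pow3_pos (n + m)). lra.
Qed.
Lemma Xs_sign (k : nat) : (/3) ^ (S k) * nrm (w (S k)) <= Rabs (re (inner (Xs w (S k)) (w (S k)))).
Proof.
  simpl Xs. rewrite re_addl, re_rsl, re_uvec by apply Hw.
  pose proof (pow3_pos (S k)). simpl pow in *. pose proof (Hw (S k)).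
  destruct (Rle_dec _ _).
  - rewrite Rabs_right; nra.
  - rewrite Rabs_left; nra.
Qed.
Lemma Xs_cauchy (n m : nat) : (n <= m)%nat -> nrm (sub (Xs w m) (Xs w n)) <= / 2 * (/3) ^ n.
Proof.
  intro H. replace m with (n + (m - n))%nat by lia.
  eapply Rle_trans; [apply Xs_dist|]. pose proof (pow3_pos (n + (m - n))). lra.
Qed.
Lemma Xs_limit : exists l, forall n, nrm (sub l (Xs w n)) <= / 2 * (/3) ^ n.
Proof.
  destruct (complete (Xs w)) as [l Hl].
  - intros eps Heps.
    destruct (pow_lt_1_zero (/3) ltac:(rewrite Rabs_right; lra) eps Heps) as [N HN].
    exists N. intros m n Hm Hn. change (nrm (sub (Xs w m) (Xs w n)) < eps).
    assert (HN' : forall k, (N <= k)%nat -> / 2 * (/3) ^ k < eps).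
    { intros k Hk. specialize (HN k Hk). rewrite Rabs_right in HN.
      - pose proof (pow3_pos k). lra.
      - left; apply pow3_pos. }
    destruct (Nat.le_ge_cases n m).
    + eapply Rle_lt_trans; [apply Xs_cauchy; auto| apply HN'; auto].
    + rewrite nrm_sub_sym. eapply Rle_lt_trans; [apply Xs_cauchy; auto| apply HN'; auto].
  - exists l. intro n. apply Rle_plus_epsilon. intros eps Heps.
    destruct (Hl eps Heps) as [N HN]. specialize (HN (Nat.max N n) (Nat.le_max_l _ _)).
    change (nrm (sub (Xs w (Nat.max N n)) l) < eps) in HN.
    eapply Rle_trans; [apply (nrm_sub3 _ _ (Xs w (Nat.max N n)))|].
    rewrite nrm_sub_sym in HN. pose proof (Xs_cauchy n (Nat.max N n) (Nat.le_max_r _ _)). lra.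
Qed.
End UBP.

Lemma ubp (I : Type) (v : I -> A) :
  (forall h, exists M, forall i, Rabs (re (inner h (v i))) <= M) ->
  exists c, forall i, nrm (v i) <= c.
Proof.
  intro Hyp. apply NNPP. intro Hn.
  assert (Hbig : forall n : nat, exists i, 2 * 3 ^ n * (INR n + 1) < nrm (v i)).
  { intro n. apply NNPP. intro H'. apply Hn. exists (2 * 3 ^ n * (INR n + 1)). intro i.
    apply Rnot_lt_le. intro H2. apply H'. exists i. exact H2. }
  set (g := fun n => proj1_sig (constructive_indefinite_description _ (Hbig n))).
  assert (Hg : forall n, 2 * 3 ^ n * (INR n + 1) < nrm (v (g n))).
  { intro n. exact (proj2_sig (constructive_indefinite_description _ (Hbig n))). }
  set (w := fun n => v (g n)).
  assert (Hw : forall n, 0 < nrm (w n)).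
  { intro n. eapply Rle_lt_trans; [|apply Hg]. pose proof (pos_INR n).
    pose proof (pow_lt 3 n ltac:(lra)). nra. }
  destruct (Xs_limit w Hw) as [l Hl].
  destruct (Hyp l) as [M HM].
  destruct (INR_unbounded M) as [k Hk].
  set (n := S k).
  pose proof (Xs_sign w Hw k) as S1. fold n in S1.
  specialize (HM (g n)). fold (w n) in HM.
  pose proof (Hl n) as S2.
  pose proof (cs_re (sub l (Xs w n)) (w n)) as S3.
  rewrite re_subl in S3.
  pose proof (Hg n) as S4. fold (w n) in S4.
  assert (E : (/3) ^ n * 3 ^ n = 1).
  { rewrite <- Rpow_mult_distr, Rinv_l by lra. apply pow1. }
  pose proof (pow3_pos n). pose proof (nrm_pos (w n)).
  assert (INR n = INR k + 1) by (unfold n; rewrite S_INR; reflexivity).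
  assert (Hlow : / 2 * (/3) ^ n * nrm (w n) <= Rabs (re (inner l (w n)))).
  { assert (S5 : nrm (sub l (Xs w n)) * nrm (w n) <= / 2 * (/3) ^ n * nrm (w n))
      by (apply Rmult_le_compat_r; auto).
    pose proof (Rabs_triang_inv (re (inner (Xs w n) (w n))) (re (inner l (w n)))) as T.
    rewrite Rabs_minus_sym in T. lra. }
  assert (/ 2 * (/3) ^ n * nrm (w n) > INR n + 1).
  { apply Rlt_gt. apply Rle_lt_trans with (/ 2 * (/3) ^ n * (2 * 3 ^ n * (INR n + 1))).
    - replace (/ 2 * (/3) ^ n * (2 * 3 ^ n * (INR n + 1))) with (((/3) ^ n * 3 ^ n) * (INR n + 1)) by field.
      rewrite E. lra.
    - apply Rmult_lt_compat_l; [|exact S4]. pose proof (pow3_pos n). lra. }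
  lra.
Qed.


Lemma inv_small (eps : R) : 0 < eps -> exists N, forall n, (N <= n)%nat -> / (INR n + 1) < eps.
Proof.
  intro He. destruct (INR_unbounded (/ eps)) as [N HN]. exists N. intros n Hn.
  apply le_INR in Hn.
  assert (0 < / eps) by (apply Rinv_0_lt_compat; lra).
  rewrite <- (Rinv_inv eps). apply Rinv_lt_contravar.
  - apply Rmult_lt_0_compat; lra.
  - lra.
Qed.
Lemma nrm_le_sub (a b : A) : nrm a <= nrm b + nrm (sub a b).
Proof. rewrite (add_sub a b) at 1. apply nrm_add. Qed.

Lemma closure_of_bound (xi : A) (c : R) : 0 <= c ->
  (forall x, inA0 x -> nrm (mulr xi x) <= c * nrm x) -> closure_bounded A xi.
Proof.
  intros Hc Hb. split.
  - intro u.
    assert (Hd : forall n : nat, exists x, inA0 x /\ nrm (sub u x) < / (INR n + 1)).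
    { intro n. apply A0_dense. apply Rinv_0_lt_compat. pose proof (pos_INR n). lra. }
    set (xs := fun n => proj1_sig (constructive_indefinite_description _ (Hd n))).
    assert (Hxs : forall n, inA0 (xs n) /\ nrm (sub u (xs n)) < / (INR n + 1)).
    { intro n. exact (proj2_sig (constructive_indefinite_description _ (Hd n))). }
    destruct (complete (fun n => mulr xi (xs n))) as [v Hv].
    + intros eps Heps.
      destruct (inv_small (eps / (2 * (c + 1)))) as [N HN].
      { apply Rdiv_lt_0_compat; lra. }
      exists N. intros m n Hm Hn.
      change (nrm (sub (mulr xi (xs m)) (mulr xi (xs n))) < eps).
      destruct (Hxs m) as [Am Bm]. destruct (Hxs n) as [An Bn].
      rewrite <- mulr_sub_r by auto.
      eapply Rle_lt_trans; [apply Hb; apply A0_add; [auto| rewrite opp_scal; apply A0_scal; auto]|].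
      pose proof (nrm_sub3 (xs m) (xs n) u). rewrite (nrm_sub_sym (xs m) u) in H.
      pose proof (HN m Hm). pose proof (HN n Hn).
      assert (eps = 2 * (c + 1) * (eps / (2 * (c + 1)))) by (field; lra).
      pose proof (nrm_pos (sub (xs m) (xs n))).
      assert (nrm (sub (xs m) (xs n)) < 2 * (eps / (2 * (c + 1)))) by lra.
      nra.
    + exists v, xs. split; [intro n; apply Hxs|]. split; [|exact Hv].
      intros eps Heps. destruct (inv_small eps Heps) as [N HN]. exists N. intros n Hn.
      rewrite nrm_sub_sym. pose proof (HN n Hn). pose proof (proj2 (Hxs n)). lra.
  - exists c. intros u v [x [Hx [Hxu Hxv]]].
    apply Rle_plus_epsilon. intros eps Heps.
    set (d := eps / (c + 1)).
    assert (Hd : 0 < d) by (unfold d; apply Rdiv_lt_0_compat; lra).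
    destruct (Hxu d Hd) as [N1 H1]. destruct (Hxv d Hd) as [N2 H2].
    set (n := Nat.max N1 N2).
    specialize (H1 n (Nat.le_max_l _ _)). specialize (H2 n (Nat.le_max_r _ _)).
    change (nrm (sub (x n) u) < d) in H1. change (nrm (sub (mulr xi (x n)) v) < d) in H2.
    pose proof (nrm_le_sub v (mulr xi (x n))). rewrite nrm_sub_sym in H.
    pose proof (Hb (x n) (Hx n)).
    pose proof (nrm_le_sub (x n) u).
    assert (eps = (c + 1) * d) by (unfold d; field; lra).
    pose proof (nrm_pos (sub (x n) u)).
    nra.
Qed.

Lemma star_bound (xi : A) (c : R) : 0 <= c ->
  (forall x, inA0 x -> nrm (mulr xi x) <= c * nrm x) ->
  forall x, inA0 x -> nrm (mulr (star xi) x) <= c * nrm x.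
Proof.
  intros Hc Hb x Hx. set (w := mulr (star xi) x).
  assert (Hy : forall y, inA0 y -> Rabs (re (inner y w)) <= c * nrm y * nrm x).
  { intros y Hy. unfold w. rewrite <- D5 by auto.
    eapply Rle_trans; [apply cs_re|]. pose proof (Hb y Hy). pose proof (nrm_pos x). nra. }
  assert (H2 : n2 w <= c * nrm w * nrm x).
  { apply Rle_plus_epsilon. intros eps Heps.
    set (d := eps / (c * nrm x + nrm w + 1)).
    pose proof (nrm_pos x). pose proof (nrm_pos w).
    assert (Hd : 0 < d) by (unfold d; apply Rdiv_lt_0_compat; nra).
    destruct (A0_dense w d Hd) as [y [Hy' Hn]]. change (nrm (sub w y) < d) in Hn.
    rewrite (add_sub w y) at 1. rewrite re_addl.
    pose proof (Hy y Hy'). pose proof (cs_re (sub w y) w).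
    pose proof (Rle_abs (re (inner y w))). pose proof (Rle_abs (re (inner (sub w y) w))).
    pose proof (nrm_le_sub y w) as H6. rewrite nrm_sub_sym in H6.
    assert (eps = (c * nrm x + nrm w + 1) * d) by (unfold d; field; nra).
    pose proof (nrm_pos (sub w y)). pose proof (nrm_pos y).
    assert (c * nrm y * nrm x <= c * (nrm w + d) * nrm x).
    { apply Rmult_le_compat_r; auto. apply Rmult_le_compat_l; auto. lra. }
    assert (nrm (sub w y) * nrm w <= d * nrm w) by (apply Rmult_le_compat_r; lra).
    nra. }
  rewrite <- nrm_sq in H2. pose proof (nrm_pos w). pose proof (nrm_pos x).
  destruct (Rle_lt_or_eq_dec 0 (nrm w) H) as [Hp|Hz].
  - apply (Rmult_le_reg_l (nrm w)); auto. nra.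
  - rewrite <- Hz. nra.
Qed.

End Basics.

Theorem mainTheorem8 (A : HQA) (xi : A) :
  (forall eta : A,
      right_multipliers A (star xi) eta <->
      (in_dom_adj_L_sq A xi eta /\
       forall y : A, inA0 y -> in_dom_adj_L A xi (mulr eta y))) /\
  (has_unit A -> forall eta : A, right_multipliers A (star xi) eta <-> in_dom_adj_L A xi eta) /\
  (has_unit A -> (forall eta : A, right_multipliers A (star xi) eta) ->
      closure_bounded A xi /\ closure_bounded A (star xi)).
Proof.
  split; [|split].
  - intro eta. split; [apply part_i_fwd|]. intros [H _]. apply part_i_bwd; exact H.
  - apply part_ii.
  - intros Hu Hall.
    assert (Hd : forall eta, in_dom_adj_L A xi eta) by (intro; apply (part_ii A xi Hu); auto).
    set (I := {y : A | inA0 y /\ 0 < hnorm A y}).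
    set (v := fun i : I => rs A (/ hnorm A (proj1_sig i)) (mulr xi (proj1_sig i))).
    destruct (ubp A I v) as [c Hc].
    { intro h. destruct (Hd h) as [zeta Hz]. exists (hnorm A zeta). intros [y [Hy Hp]].
      unfold v; simpl. rewrite re_rsr, re_sym, Hz by exact Hy.
      pose proof (cs_re A y zeta). rewrite Rabs_mult, Rabs_right.
      2: { left; apply Rinv_0_lt_compat; exact Hp. }
      apply (Rmult_le_reg_l (hnorm A y)); auto.
      rewrite <- Rmult_assoc, Rinv_r by lra. pose proof (nrm_pos A zeta). nra. }
    set (c' := Rmax c 0).
    assert (Hc0 : 0 <= c') by apply Rmax_r.
    assert (Hb : forall x, inA0 x -> hnorm A (mulr xi x) <= c' * hnorm A x).
    { intros x Hx. pose proof (nrm_pos A x).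
      destruct (Rle_lt_or_eq_dec 0 (hnorm A x) H) as [Hp|Hz].
      - specialize (Hc (exist _ x (conj Hx Hp))). unfold v in Hc; simpl in Hc.
        rewrite nrm_rs, Rabs_right in Hc by (left; apply Rinv_0_lt_compat; exact Hp).
        pose proof (Rmax_l c 0). fold c' in H0.
        apply (Rmult_le_reg_l (/ hnorm A x)); [apply Rinv_0_lt_compat; exact Hp|].
        replace (/ hnorm A x * (c' * hnorm A x)) with c' by (field; lra). lra.
      - symmetry in Hz. apply nrm0 in Hz. subst x. rewrite mulr_zero_r, nrm_zero. lra. }
    split.
    + apply (closure_of_bound A xi c'); auto.
    + apply (closure_of_bound A (star xi) c'); auto. apply star_bound; auto.
Qed.
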